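(* Let $r=r(n)\ge 2$ with $r=o(n^{3/8})$. Then $\Pr(\mathcal B_{3r}\mid\mathcal A_4)=1-o(1)$ as $n\to\infty$.
   Context: Random intersecting process: Let $[n]=\{1,\dots,n\}$ and $\binom{[n]}{r}$ the family of $r$-subsets of $[n]$. Choose $e_1$ uniformly at random from $\binom{[n]}{r}$. Given $\mathcal F_i=\{e_1,\dots,e_i\}$, let $\mathcal A(\mathcal F_i)=\{e\in\binom{[n]}{r}: e\notin\mathcal F_i,\ e\cap e_j\neq\emptyset \text{ for all } 1\le j\le i\}$, and choose $e_{i+1}$ uniformly at random from $\mathcal A(\mathcal F_i)$. The process halts when $\mathcal A(\mathcal F_i)=\emptyset$. A star is a collection of sets such that every pair of them has the same one-element intersection $\{x\}$ ($x$ is the kernel); a single set is a $1$-star by convention. For $i\ge1$, $\mathcal A_i$ is the event that at least $i$ edges are chosen and $\mathcal F_i$ is an $i$-star. For $i\ge3$, $\mathcal B_i$ is the event that at least $i$ edges are chosen and $\bigcap_{j=1}^i e_j\neq\emptyset$. *)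

(* Defs.v *)
From HB Require Import structures.
From mathcomp Require Import all_boot all_order all_algebra.
Set Implicit Arguments. Unset Strict Implicit. Unset Printing Implicit Defensive.
Import Order.TTheory GRing.Theory Num.Theory.
Local Open Scope ring_scope.

Definition avail (n r : nat) (F : seq {set 'I_n}) : {set {set 'I_n}} :=
  [set e : {set 'I_n} | [&& #|e| == r, e \notin F &
     all (fun f => e :&: f != set0) F]].

(* pr n r F s : probability that, having already chosen the history F,
   the next edges chosen by the process are (in order) those of s. *)
Fixpoint pr (n r : nat) (F : seq {set 'I_n}) (s : seq {set 'I_n}) : rat :=
  match s with
  | [::] => 1
  | e :: s' => if e \in @avail n r F
               then (#|@avail n r F|%:R)^-1 * @pr n r (rcons F e) s'
               else 0
  end.

(* Probability that at least m edges are chosen and (e_1,...,e_m) satisfies Q. *)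
Definition probEv (n r m : nat) (Q : seq {set 'I_n} -> bool) : rat :=
  \sum_(t : m.-tuple {set 'I_n}) @pr n r [::] (tval t) * (Q (tval t))%:R.

Definition is_star (T : finType) (s : seq {set T}) : bool :=
  [exists x : T, [forall i : 'I_(size s), forall j : 'I_(size s),
     (i != j) ==> (nth set0 s i :&: nth set0 s j == [set x])]].

Definition evA (n : nat) (i : nat) (s : seq {set 'I_n}) : bool :=
  is_star (take i s).

Definition evB (n : nat) (i : nat) (s : seq {set 'I_n}) : bool :=
  \bigcap_(e <- take i s) e != set0.

Definition condPr_B3r_A4 (n r : nat) : rat :=
  @probEv n r (3 * r)%N (fun s => @evB n (3 * r)%N s && @evA n 4 s)
  / @probEv n r 4 (fun s => @evA n 4 s).

(* Main.v *)
Require Import Defs.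
From HB Require Import structures.
From mathcomp Require Import all_boot all_order all_algebra.
From mathcomp Require Import ring lra zify.
Set Implicit Arguments. Unset Strict Implicit. Unset Printing Implicit Defensive.
Import Order.TTheory GRing.Theory Num.Theory.
Local Open Scope ring_scope.

Section Proc.
Variables (n r : nat).
Local Notation T := {set 'I_n}.

Fixpoint E (F : seq T) (m : nat) (Q : seq T -> rat) : rat :=
  match m with
  | 0 => Q [::]
  | m'.+1 => \sum_(e in avail r F) (#|avail r F|%:R)^-1 * E (rcons F e) m' (fun u => Q (e :: u))
  end.

Lemma probE m : forall F (Q : seq T -> rat),
  \sum_(t : m.-tuple T) pr r F t * Q t = E F m Q.
Proof.
elim: m => [|m IH] F Q.
  rewrite (eq_bigl (pred1 [tuple])); last by move=> t; apply/esym/eqP; apply: tuple0.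
  by rewrite big_pred1_eq /= mul1r.
rewrite (reindex (fun p : T * m.-tuple T => [tuple of p.1 :: p.2])); last first.
  exists (fun t : m.+1.-tuple T => (thead t, [tuple of behead t])).
    by move=> [e t] _; congr pair; apply: val_inj.
  by move=> t _; apply: val_inj => /=; case: t => [[|x s] //=].
rewrite -(pair_big predT predT (fun e (t : m.-tuple T) => pr r F (e :: t) * Q (e :: t))) /=.
rewrite /= [RHS]big_mkcond; apply: eq_bigr => e _ /=.
case: ifP => He.
  rewrite -IH mulr_sumr; apply: eq_bigr => t _; by rewrite mulrA.
by rewrite big1 // => t _; rewrite mul0r.
Qed.

Lemma E_ext m : forall F (Q Q' : seq T -> rat), (forall u, Q u = Q' u) -> E F m Q = E F m Q'.
Proof.
elim: m => [|m IH] F Q Q' H /=; first exact: H.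
by apply: eq_bigr => e _; congr (_ * _); apply: IH => u.
Qed.

Lemma E_ge0 m : forall F (Q : seq T -> rat), (forall u, 0 <= Q u) -> 0 <= E F m Q.
Proof.
elim: m => [|m IH] F Q H /=; first exact: H.
apply: sumr_ge0 => e _; apply: mulr_ge0; first by rewrite invr_ge0 ler0n.
exact: IH.
Qed.

Lemma E_mono m : forall F (Q Q' : seq T -> rat),
  (forall u : seq T, size u = m -> all (fun e : T => #|e| == r) u -> Q' u <= Q u) ->
  E F m Q' <= E F m Q.
Proof.
elim: m => [|m IH] F Q Q' H /=; first exact: H.
apply: ler_sum => e He; apply: ler_wpM2l; first by rewrite invr_ge0 ler0n.
apply: IH => u Hu Ha; apply: H; first by rewrite /= Hu.
move: He; rewrite inE => /and3P [He _ _]; by rewrite /= He.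
Qed.

Lemma E_scale m : forall F (Q : seq T -> rat) c, E F m (fun u => c * Q u) = c * E F m Q.
Proof.
elim: m => [|m IH] F Q c //=.
rewrite mulr_sumr; apply: eq_bigr => e _; by rewrite IH mulrCA.
Qed.

Lemma E_cat a b : forall F (Q : seq T -> rat),
  E F (a + b) Q = E F a (fun s => E (F ++ s) b (fun u => Q (s ++ u))).
Proof.
elim: a => [|a IH] F Q.
  by rewrite add0n /= cats0.
rewrite addSn /=; apply: eq_bigr => e _; congr (_ * _).
rewrite IH; apply: E_ext => s; by rewrite cat_rcons.
Qed.


Fixpoint valid (F : seq T) (s : seq T) : bool :=
  match s with [::] => true | e :: s' => (e \in avail r F) && valid (rcons F e) s' end.

Lemma E_pos s : forall F (Q : seq T -> rat), (forall u, 0 <= Q u) -> valid F s -> 0 < Q s ->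
  0 < E F (size s) Q.
Proof.
elim: s => [|e s IH] F Q H0 //= /andP [He Hv] HQ.
rewrite (bigD1 e) //=; apply: ltr_wpDr.
  apply: sumr_ge0 => e' _; apply: mulr_ge0; first by rewrite invr_ge0 ler0n.
  exact: E_ge0.
apply: mulr_gt0; first by rewrite invr_gt0 ltr0n card_gt0; apply/set0Pn; exists e.
exact: IH.
Qed.

Definition good (x : 'I_n) F := avail r F :&: [set e : T | x \in e].
Definition bad (x : 'I_n) F := avail r F :\: [set e : T | x \in e].

Lemma inner (x : 'I_n) (P : seq T -> Prop) K (d : rat) :
  0 <= d ->
  (forall F (e : T), P F -> x \in e -> P (rcons F e)) ->
  (forall F : seq T, P F -> (size F < K)%N ->
      (0 < #|avail r F|)%N /\ #|bad x F|%:R <= d * #|avail r F|%:R) ->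
  forall m (F : seq T), P F -> (size F + m <= K)%N ->
  1 - m%:R * d <= E F m (fun u => (all (fun e : T => x \in e) u)%:R).
Proof.
move=> d0 HP Hb; elim=> [|m IH] F PF HK; first by rewrite /= mul0r subr0.
have HsK : (size F < K)%N by lia.
have [HA Hbad] := Hb F PF HsK.
case: (lerP 0 (1 - m%:R * d)) => Hs; last first.
  have H0 : 0 <= E F m.+1 (fun u => (all (fun e : T => x \in e) u)%:R).
    by apply: E_ge0 => u; rewrite ler0n.
  apply: le_trans H0; rewrite -natr1 mulrDl mul1r; lra.
rewrite /=.
have step : forall e, e \in avail r F ->
   (#|avail r F|%:R)^-1 * ((x \in e)%:R * (1 - m%:R * d)) <=
   (#|avail r F|%:R)^-1 * E (rcons F e) m (fun u => (all (fun e0 : T => x \in e0) (e :: u))%:R).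
  move=> e He; apply: ler_wpM2l; first by rewrite invr_ge0 ler0n.
  case Hx: (x \in e).
    rewrite mul1r (E_ext _ _ (Q' := fun u => (all (fun e0 : T => x \in e0) u)%:R)); last first.
      by move=> u /=; rewrite Hx.
    apply: IH; first exact: HP.
    by rewrite size_rcons addSn -addnS.
  rewrite mul0r; apply: E_ge0 => u; exact: ler0n.
apply: le_trans (ler_sum _ step).
rewrite -mulr_sumr -mulr_suml.
have -> : \sum_(i in avail r F) (x \in i)%:R = (#|good x F|%:R : rat).
  rewrite (eq_bigr (fun i : T => if x \in i then (1:rat) else 0)); last by move=> i _; case: (x \in i).
  rewrite -big_mkcondr sumr_const; congr (_ *+ _); apply: eq_card => e.
  by rewrite /good in_setI [in RHS]inE unfold_in.
have Hc := cardsID [set e : T | x \in e] (avail r F).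
rewrite -/(good x F) -/(bad x F) in Hc.
have Apos : (0 : rat) < #|avail r F|%:R by rewrite ltr0n.
have -> : (#|good x F|%:R : rat) = #|avail r F|%:R - #|bad x F|%:R.
  by rewrite -Hc natrD addrK.
set a := (#|avail r F|%:R : rat) in Apos Hbad *.
set b := (#|bad x F|%:R : rat) in Hbad *.
have Hq : 1 - d <= a^-1 * (a - b).
  rewrite mulrBr mulVf ?gt_eqF //; rewrite lerD2l lerN2.
  by rewrite ler_pdivrMl // mulrC.
rewrite mulrA; apply: le_trans (ler_wpM2r Hs Hq).
rewrite -natr1 mulrDl mul1r.
have : 0 <= m%:R * d * d by apply: mulr_ge0 => //; apply: mulr_ge0 => //; rewrite ler0n.
set md := m%:R * d; move=> H; nra.
Qed.


Lemma setDUK' (P e : T) : P \subset e -> (e :\: P) :|: P = e.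
Proof.
move=> HP; apply/setP => y; rewrite in_setU in_setD.
case Hy: (y \in P) => /=; last by rewrite orbF.
by rewrite (subsetP HP).
Qed.

Lemma neq_pts (x a b : 'I_n) (e si sj : T) :
  a \in e -> a \in si -> b \in sj -> si :&: sj = [set x] -> x \notin e -> a != b.
Proof.
move=> Hae Hai Hbj Hij Hx; apply/eqP => Hab; subst b.
have : a \in si :&: sj by rewrite inE Hai Hbj.
rewrite Hij inE => /eqP Hax; subst a; by rewrite Hae in Hx.
Qed.

Lemma bad_bound (x : 'I_n) (s1 s2 s3 s4 : T) (F : seq T) :
  s1 \in F -> s2 \in F -> s3 \in F -> s4 \in F ->
  #|s1| = r -> #|s2| = r -> #|s3| = r -> #|s4| = r ->
  s1 :&: s2 = [set x] -> s1 :&: s3 = [set x] -> s1 :&: s4 = [set x] ->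
  s2 :&: s3 = [set x] -> s2 :&: s4 = [set x] -> s3 :&: s4 = [set x] ->
  (#|bad x F| <= r ^ 4 * #|[set R : T | #|R| + 4 == r]|)%N.
Proof.
move=> F1 F2 F3 F4 c1 c2 c3 c4 h12 h13 h14 h23 h24 h34.
set D := [set R : T | #|R| + 4 == r].
pose pk (e s : T) := odflt x [pick a in e :&: s].
have pkP : forall e s, e :&: s != set0 -> pk e s \in e :&: s.
  move=> e s /set0Pn [a Ha]; rewrite /pk; case: pickP => [b Hb|H] //=.
  by have := H a; rewrite /= Ha.
pose Pset e := pk e s1 |: (pk e s2 |: (pk e s3 |: [set pk e s4])).
pose f e := (pk e s1, pk e s2, pk e s3, pk e s4, e :\: Pset e).
have key : forall e, e \in bad x F -> [/\ #|e| = r, x \notin e,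
     [/\ pk e s1 \in e, pk e s2 \in e, pk e s3 \in e & pk e s4 \in e] &
     [/\ pk e s1 \in s1, pk e s2 \in s2, pk e s3 \in s3 & pk e s4 \in s4]].
  move=> e; rewrite /bad in_setD inE => /andP [Hx]; rewrite inE => /and3P [/eqP Hc _ /allP Ha].
  have q1 := pkP _ _ (Ha _ F1); have q2 := pkP _ _ (Ha _ F2).
  have q3 := pkP _ _ (Ha _ F3); have q4 := pkP _ _ (Ha _ F4).
  move: q1 q2 q3 q4; rewrite !inE => /andP [a1 b1] /andP [a2 b2] /andP [a3 b3] /andP [a4 b4].
  by split.
have Psub : forall e, e \in bad x F -> Pset e \subset e.
  move=> e /key [_ _ [a1 a2 a3 a4] _]; apply/subsetP => y; rewrite !inE.
  by case/or4P => /eqP ->.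
have Pcard : forall e, e \in bad x F -> #|Pset e| = 4%N.
  move=> e /key [_ Hx [a1 a2 a3 a4] [b1 b2 b3 b4]].
  have n12 := neq_pts a1 b1 b2 h12 Hx; have n13 := neq_pts a1 b1 b3 h13 Hx.
  have n14 := neq_pts a1 b1 b4 h14 Hx; have n23 := neq_pts a2 b2 b3 h23 Hx.
  have n24 := neq_pts a2 b2 b4 h24 Hx; have n34 := neq_pts a3 b3 b4 h34 Hx.
  rewrite /Pset !cardsU1 cards1 !inE.
  by rewrite (negbTE n12) (negbTE n13) (negbTE n14) (negbTE n23) (negbTE n24) (negbTE n34).
have finj : {in bad x F &, injective f}.
  move=> e e' He He' [h1 h2 h3 h4 h5].
  have EP : Pset e = Pset e' by rewrite /Pset h1 h2 h3 h4.
  by rewrite -(setDUK' (Psub _ He)) -(setDUK' (Psub _ He')) h5 EP.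
pose S := setX (setX (setX (setX s1 s2) s3) s4) D.
have fsub : f @: bad x F \subset S.
  apply/subsetP => t /imsetP [e He ->]; rewrite /S !in_setX.
  have [Hc _ _ [b1 b2 b3 b4]] := key _ He.
  rewrite b1 b2 b3 b4 /= /D inE cardsD (setIidPr (Psub _ He)) Pcard // Hc.
  have := subset_leq_card (Psub _ He); rewrite Pcard // Hc => H4.
  apply/eqP; lia.
rewrite -(card_in_imset finj); apply: leq_trans (subset_leq_card fsub) _.
by rewrite /S !cardsX c1 c2 c3 c4 !expnS expn0 muln1 !mulnA.
Qed.


Lemma avail_lb (x : 'I_n) (F : seq T) : (forall f, f \in F -> x \in f) -> (1 <= r)%N ->
  ('C(n.-1, r.-1) - size F <= #|avail r F|)%N.
Proof.
move=> HF r1.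
set G := [set e : T | (#|e| == r) && (x \in e)].
set B := [set e in F].
have sub : G :\: B \subset avail r F.
  apply/subsetP => e; rewrite !inE => /andP [HeF /andP [Hc Hx]].
  rewrite Hc HeF /=; apply/allP => f Hf; apply/set0Pn; exists x.
  by rewrite inE Hx HF.
set R := [set A : T | (A \subset [set~ x]) && (#|A| == r.-1)].
have injU : {in R &, injective (fun A : T => x |: A)}.
  move=> A A' HA HA' /= Heq.
  have nA : x \notin A.
    by move: HA; rewrite inE => /andP [/subsetP H _]; apply/negP => /H; rewrite !inE eqxx.
  have nA' : x \notin A'.
    by move: HA'; rewrite inE => /andP [/subsetP H _]; apply/negP => /H; rewrite !inE eqxx.
  by rewrite -(setU1K nA) -(setU1K nA') Heq.
have imG : [set x |: A | A in R] \subset G.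
  apply/subsetP => e /imsetP [A HA ->].
  have nA : x \notin A.
    by move: HA; rewrite inE => /andP [/subsetP H _]; apply/negP => /H; rewrite !inE eqxx.
  move: HA; rewrite inE => /andP [_ /eqP HA].
  rewrite inE cardsU1 nA HA setU11 andbT; apply/eqP; lia.
have cR : #|R| = 'C(n.-1, r.-1) by rewrite cards_draws cardsC1 card_ord.
have cG : ('C(n.-1, r.-1) <= #|G|)%N.
  by rewrite -cR -(card_in_imset injU); apply: subset_leq_card.
apply: leq_trans (subset_leq_card sub).
rewrite cardsD.
have : (#|G :&: B| <= size F)%N.
  apply: leq_trans (subset_leq_card (subsetIr G B)) _.
  by rewrite /B cardsE card_size.
lia.
Qed.

End Proc.
Local Open Scope nat_scope.
Lemma chain {A B C D c0 c1 c2 c3 g k1 k2 k3 N : nat} : (k1*c1 = A*c0 -> k2*c2 = B*c1 -> k3*c3 = C*c2 -> N*g = D*c3 -> A*B*C*D*c0 = k1*k2*k3*N*g)%N.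
Proof.
move=> e1 e2 e3 e4.
have -> : (A*B*C*D*c0 = B*C*D*(A*c0))%N by ring.
rewrite -e1.
have -> : (B*C*D*(k1*c1) = k1*C*D*(B*c1))%N by ring.
rewrite -e2.
have -> : (k1*C*D*(k2*c2) = k1*k2*D*(C*c2))%N by ring.
rewrite -e3.
have -> : (k1*k2*D*(k3*c3) = k1*k2*k3*(D*c3))%N by ring.
rewrite -e4; ring.
Qed.

Lemma binom_ratio n r : (4 <= r <= n)%N ->
  ('C(n, r - 4) * (n - r + 1) ^ 4 <= n * r ^ 3 * 'C(n.-1, r.-1))%N.
Proof.
move=> /andP [r4 rn].
have [k Hk] : exists k, r = k + 4 by exists (r - 4); lia.
subst r.
have -> : (k + 4 - 4 = k)%N by lia.
have -> : ((k + 4).-1 = k.+3)%N by lia.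
have := chain (mul_bin_left n k) (mul_bin_left n k.+1) (mul_bin_left n k.+2) (mul_bin_down n k.+3).
move=> Ech.
have H1 : ((n - (k + 4) + 1) ^ 4 <= (n - k) * (n - k.+1) * (n - k.+2) * (n - k.+3))%N.
  rewrite !expnS expn0 muln1 -!mulnA.
  apply: leq_mul; first lia. apply: leq_mul; first lia. apply: leq_mul; lia.
apply: leq_trans (leq_mul (leqnn 'C(n, k)) H1) _.
rewrite mulnC Ech.
rewrite [X in (_ <= X)%N](_ : _ = (k + 4) * ((k + 4) * (k + 4)) * (n * 'C(n.-1, k.+3)))%N; last first.
  by rewrite !expnS expn0 muln1; ring.
rewrite [X in (X <= _)%N](_ : _ = (k.+1 * (k.+2 * k.+3)) * (n * 'C(n.-1, k.+3)))%N; last by ring.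
apply: leq_mul; last done.
apply: leq_mul; first lia. apply: leq_mul; lia.
Qed.

Lemma binom_lb a : forall j, (1 <= j < a -> a <= 'C(a, j))%N.
Proof.
elim: a => [|a IH] j Hj; first lia.
case: j Hj => [|[|j]] Hj; first lia; first by rewrite bin1.
rewrite binS.
have h1 := IH j.+1 ltac:(lia).
have h2 : (0 < 'C(a, j.+2))%N by rewrite bin_gt0; lia.
lia.
Qed.

Lemma card_cnt n (p : pred nat) : #|[set j : 'I_n | p (val j)]| = count p (iota 0 n).
Proof.
rewrite cardE /enum_mem size_filter -val_enum_ord count_map enumT.
by apply: eq_count => j; rewrite /= inE.
Qed.

Lemma count_blk n a b : (a + b < n)%N ->
  count (fun v => (v == 0)%N || (a < v <= a + b)%N) (iota 0 n) = b.+1.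
Proof.
move=> H.
have -> : n = (1 + a + b + (n - (1 + a + b)))%N by lia.
rewrite !iotaD !count_cat /=.
rewrite (@eq_in_count _ _ pred0 (iota 1 a)); last first.
  by move=> v; rewrite mem_iota => Hv /=; apply/negbTE; rewrite negb_or; apply/andP; split; lia.
rewrite (@eq_in_count _ _ predT (iota (1 + a) b)); last first.
  by move=> v; rewrite mem_iota => Hv /=; apply/orP; right; apply/andP; split; lia.
rewrite (@eq_in_count _ _ pred0 (iota (0 + 1 + a + b) _)); last first.
  by move=> v; rewrite mem_iota => Hv /=; apply/negbTE; rewrite negb_or; apply/andP; split; lia.
by rewrite !count_pred0 count_predT size_iota; lia.
Qed.

Local Open Scope ring_scope.

Lemma star_exists n r : (2 <= r)%N -> (4 * r <= n)%N ->
  exists s : seq {set 'I_n}, [&& valid r [::] s, evA 4 s & size s == 4%N].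
Proof.
case: n => [|n'] Hr Hn; first lia.
pose b := r.-1.
pose blk (a : nat) : {set 'I_n'.+1} :=
  [set j : 'I_n'.+1 | (val j == 0)%N || (a < val j <= a + b)%N].
have cb : forall a, (a + b < n'.+1)%N -> #|blk a| = r.
  move=> a Ha; rewrite /blk (@card_cnt n'.+1 (fun v => (v == 0)%N || (a < v <= a + b)%N)).
  rewrite count_blk //; rewrite /b; lia.
have ib : forall a a', (a + b <= a')%N -> blk a :&: blk a' = [set ord0].
  move=> a a' Ha; apply/setP => y; rewrite !inE -[y == ord0](inj_eq val_inj) /=.
  case: (val y == 0)%N => //=.
  apply/negbTE/negP => /andP [/andP [h1 h2] /andP [h3 h4]]; lia.
have ne : forall A B : {set 'I_n'.+1}, A :&: B = [set ord0] -> #|A| = r -> A != B.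
  move=> A B H HA; apply/eqP => HAB; subst B; move: H; rewrite setIid => H.
  by move: HA; rewrite H cards1; lia.
have me : forall A B : {set 'I_n'.+1}, A :&: B = [set ord0] -> A :&: B != set0.
  by move=> A B ->; apply/set0Pn; exists ord0; rewrite set11.
have c0 := cb 0%N ltac:(rewrite /b; lia).
have c1 := cb b ltac:(rewrite /b; lia).
have c2 := cb (2 * b)%N ltac:(rewrite /b; lia).
have c3 := cb (3 * b)%N ltac:(rewrite /b; lia).
have i01 := ib 0%N b ltac:(lia). have i02 := ib 0%N (2 * b)%N ltac:(lia).
have i03 := ib 0%N (3 * b)%N ltac:(lia). have i12 := ib b (2 * b)%N ltac:(lia).
have i13 := ib b (3 * b)%N ltac:(lia). have i23 := ib (2 * b)%N (3 * b)%N ltac:(lia).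
have i10 : blk b :&: blk 0%N = [set ord0] by rewrite setIC.
have i20 : blk (2 * b)%N :&: blk 0%N = [set ord0] by rewrite setIC.
have i30 : blk (3 * b)%N :&: blk 0%N = [set ord0] by rewrite setIC.
have i21 : blk (2 * b)%N :&: blk b = [set ord0] by rewrite setIC.
have i31 : blk (3 * b)%N :&: blk b = [set ord0] by rewrite setIC.
have i32 : blk (3 * b)%N :&: blk (2 * b)%N = [set ord0] by rewrite setIC.
exists [:: blk 0%N; blk b; blk (2 * b)%N; blk (3 * b)%N].
apply/and3P; split => //.
  rewrite /= !inE c0 c1 c2 c3 eqxx /=.
  rewrite (me _ _ i10) (me _ _ i20) (me _ _ i30) (me _ _ i21) (me _ _ i31) (me _ _ i32) /=.
  rewrite (ne _ _ i10 c1) (negbTE (ne _ _ i20 c2)) (negbTE (ne _ _ i30 c3)).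
  by rewrite (negbTE (ne _ _ i21 c2)) (negbTE (ne _ _ i31 c3)) (negbTE (ne _ _ i32 c3)).
rewrite /evA /=; apply/existsP; exists ord0.
apply/forallP => i; apply/forallP => j; apply/implyP => Hij.
case: i Hij => [[|[|[|[|i]]]] Hi] //; case: j => [[|[|[|[|j]]]] Hj] //= Hij;
  by apply/eqP.
Qed.

Lemma num_bound (n r : nat) (eps : rat) : (2 <= r)%N -> 0 < eps -> (6 * r < n)%N ->
  ((r ^ 8)%:R <= eps / 100 * (n ^ 3)%:R) ->
  ((r ^ 4 * #|[set R : {set 'I_n} | #|R| + 4 == r]|)%:R <=
     eps / (3 * r)%:R * ('C(n.-1, r.-1) - 3 * r)%N%:R).
Proof.
move=> r2 e0 rn h8.
set G := 'C(n.-1, r.-1).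
have hG : (n.-1 <= G)%N by apply: binom_lb; lia.
have r0 : (0 : rat) < (3 * r)%:R by rewrite ltr0n; lia.
have hR : 0 <= eps / (3 * r)%:R * (G - 3 * r)%N%:R.
  by apply: mulr_ge0; [apply: divr_ge0; [exact: ltW|exact: ltW] | exact: ler0n].
case: (ltnP r 4) => r4.
  have -> : [set R : {set 'I_n} | #|R| + 4 == r] = set0.
    by apply/setP => R; rewrite !inE; apply/negbTE/eqP; lia.
  by rewrite cards0 muln0.
have -> : [set R : {set 'I_n} | #|R| + 4 == r] = [set R : {set 'I_n} | #|R| == (r - 4)%N].
  apply/setP => R; rewrite !inE; apply/eqP/eqP; lia.
rewrite card_draws card_ord.
set c := 'C(n, (r - 4)%N).
have hb := binom_ratio (n := n) (r := r) ltac:(lia).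
rewrite -/c -/G in hb.
have hm : (n ^ 4 <= 16 * (n - r + 1) ^ 4)%N.
  have -> : (16 = 2 ^ 4)%N by [].
  by rewrite -expnMn leq_exp2r //; lia.
have h5 : (c * n ^ 4 <= 16 * (n * r ^ 3 * G))%N.
  apply: leq_trans (leq_mul (leqnn c) hm) _.
  rewrite mulnCA; apply: leq_mul => //.
have h6 : (3 * r ^ 5 * c * n ^ 4 <= 48 * r ^ 8 * (n * G))%N.
  have -> : (3 * r ^ 5 * c * n ^ 4 = 3 * r ^ 5 * (c * n ^ 4))%N by rewrite !mulnA.
  have -> : (48 * r ^ 8 * (n * G) = 3 * r ^ 5 * (16 * (n * r ^ 3 * G)))%N.
    rewrite !expnS expn0; ring.
  by apply: leq_mul.
have n4 : (0 : rat) < (n ^ 4)%:R by rewrite ltr0n expn_gt0; lia.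
have h7 : (3 * r ^ 5 * c)%:R <= 48 / 100 * eps * G%:R :> rat.
  rewrite -(ler_pM2r n4) -natrM.
  apply: le_trans (_ : (48 * r ^ 8 * (n * G))%:R <= _); first by rewrite ler_nat.
  rewrite !(natrX, natrM); rewrite natrX in h8.
  have Hp : (0 : rat) <= 48%:R * (n%:R * G%:R) by apply: mulr_ge0; [exact: ler0n | apply: mulr_ge0; exact: ler0n].
  have H := ler_wpM2r Hp h8.
  apply: le_trans (_ : (r%:R ^+ 8) * (48%:R * (n%:R * G%:R)) <= _).
    by rewrite le_eqVlt; apply/orP; left; apply/eqP; ring.
  apply: le_trans H _.
  by rewrite le_eqVlt; apply/orP; left; apply/eqP; ring.
have hG6 : (6 * r <= G)%N by lia.
have hG' : (6 * r)%:R <= G%:R :> rat by rewrite ler_nat.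
rewrite mulrAC ler_pdivlMr // natrB; last by lia.
have -> : ((r ^ 4 * c)%:R * (3 * r)%:R : rat) = (3 * r ^ 5 * c)%:R.
  rewrite -natrM; congr (_%:R); rewrite !expnS expn0; ring.
apply: le_trans h7 _.
rewrite !natrM in hG' *.
set g := (G%:R : rat) in hG' *; set rr := (r%:R : rat) in hG' *.
have : 0 <= 52 / 100 * g - 3%:R * rr by lra.
move=> H; nra.
Qed.

Lemma star_facts n r (s : seq {set 'I_n}) : size s = 4%N ->
  all (fun e : {set 'I_n} => #|e| == r) s -> evA 4 s ->
  exists x s1 s2 s3 s4, [/\ s = [:: s1; s2; s3; s4],
     [/\ #|s1| = r, #|s2| = r, #|s3| = r & #|s4| = r],
     [/\ s1 :&: s2 = [set x], s1 :&: s3 = [set x], s1 :&: s4 = [set x] & s2 :&: s3 = [set x]] &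
     s2 :&: s4 = [set x] /\ s3 :&: s4 = [set x]].
Proof.
case: s => [|s1 [|s2 [|s3 [|s4 [|? ?]]]]] //= _.
rewrite !andbT => /and4P [/eqP c1 /eqP c2 /eqP c3 /eqP c4].
rewrite /evA /= => /existsP [x /forallP H].
have f : forall i j (hi : (i < 4)%N) (hj : (j < 4)%N), (i != j)%N ->
    nth set0 [:: s1; s2; s3; s4] i :&: nth set0 [:: s1; s2; s3; s4] j == [set x].
  move=> i j hi hj hij.
  exact: (implyP (forallP (H (Ordinal hi)) (Ordinal hj)) hij).
exists x, s1, s2, s3, s4; split => //.
  by split; apply/eqP; [apply: (f 0%N 1%N) | apply: (f 0%N 2%N) | apply: (f 0%N 3%N) | apply: (f 1%N 2%N)].
by split; apply/eqP; [apply: (f 1%N 3%N) | apply: (f 2%N 3%N)].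
Qed.

Lemma in_bigcap n (x : 'I_n) (l : seq {set 'I_n}) :
  (forall e, e \in l -> x \in e) -> x \in \bigcap_(e <- l) e.
Proof.
elim: l => [|e l IH] H; first by rewrite big_nil inE.
rewrite big_cons inE; apply/andP; split; first by apply: H; rewrite mem_head.
by apply: IH => f Hf; apply: H; rewrite in_cons Hf orbT.
Qed.

Lemma main_n n r (eps : rat) : (2 <= r)%N -> 0 < eps -> (6 * r < n)%N ->
  ((r ^ 8)%:R <= eps / 100 * (n ^ 3)%:R) -> 1 - eps <= condPr_B3r_A4 n r.
Proof.
move=> r2 e0 rn h8.
have r1 : (1 <= r)%N by lia.
have hG0 : (n.-1 <= 'C(n.-1, r.-1))%N by apply: binom_lb; lia.
have r4n : (4 * r <= n)%N by lia.
have e34 : (3 * r = 4 + (3 * r - 4))%N by lia.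
rewrite /condPr_B3r_A4 /probEv.
rewrite (@probE n r (3 * r) [::] (fun s => (evB (3 * r) s && evA 4 s)%:R)).
rewrite (@probE n r 4 [::] (fun s => (evA 4 s)%:R)).
have Ypos : 0 < @E n r [::] 4 (fun s => (evA 4 s)%:R).
  have [s /and3P [Hv HA /eqP Hs]] := @star_exists n r r2 r4n.
  have H0 := @E_pos n r s [::] (fun s => (evA 4 s)%:R) (fun u => ler0n _ _) Hv.
  rewrite Hs in H0; apply: H0; by rewrite HA.
rewrite ler_pdivlMr //.
rewrite {1}e34.
rewrite E_cat -E_scale; apply: E_mono => s Hs Ha /=.
case HA: (evA 4 s); last first.
  rewrite mulr0; apply: E_ge0 => u; exact: ler0n.
rewrite mulr1.
have [x [s1 [s2 [s3 [s4 [Es [c1 c2 c3 c4] [h12 h13 h14 h23] [h24 h34]]]]]]] := star_facts Hs Ha HA.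
have xs : forall i j : {set 'I_n}, i :&: j = [set x] -> x \in i /\ x \in j.
  move=> i j H; have : x \in i :&: j by rewrite H set11.
  by rewrite inE => /andP.
have [x1 x2] := xs _ _ h12; have [_ x3] := xs _ _ h13; have [_ x4] := xs _ _ h14.
set d := eps / (3 * r)%:R.
have d0 : 0 <= d by apply: divr_ge0; [exact: ltW | exact: ler0n].
pose P (F : seq {set 'I_n}) := (forall f, f \in F -> x \in f) /\
   [/\ s1 \in F, s2 \in F, s3 \in F & s4 \in F].
have HP : forall F (e : {set 'I_n}), P F -> x \in e -> P (rcons F e).
  move=> F e [H1 [i1 i2 i3 i4]] Hx; split.
    by move=> f; rewrite mem_rcons in_cons => /orP [/eqP -> | /H1].
  by split; rewrite mem_rcons in_cons ?i1 ?i2 ?i3 ?i4 orbT.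
have Hb : forall F : seq {set 'I_n}, P F -> (size F < 3 * r)%N ->
      (0 < #|avail r F|)%N /\ #|bad r x F|%:R <= d * #|avail r F|%:R.
  move=> F [H1 [i1 i2 i3 i4]] HF.
  have hl := avail_lb H1 r1.
  split; first by clear -hl hG0 HF rn; lia.
  have hbb := bad_bound i1 i2 i3 i4 c1 c2 c3 c4 h12 h13 h14 h23 h24 h34.
  apply: le_trans (_ : (r ^ 4 * #|[set R : {set 'I_n} | #|R| + 4 == r]|)%N%:R <= _).
    by rewrite ler_nat.
  apply: le_trans (num_bound r2 e0 rn h8) _.
  apply: ler_wpM2l => //; rewrite ler_nat; clear -hl HF; lia.
have Hin := inner d0 HP Hb (m := (3 * r - 4)%N) (F := s).
have PS : P s.
  rewrite Es; split; last by split; rewrite !inE eqxx ?orbT.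
  by move=> f; rewrite !inE => /or4P [] /eqP ->.
have := Hin PS ltac:(rewrite Hs; clear -r2; lia).
move=> H1; apply: le_trans (_ : 1 - (3 * r - 4)%N%:R * d <= _).
  rewrite lerD2l lerN2 /d mulrA ler_pdivrMr; last by rewrite ltr0n; clear -r1; lia.
  rewrite mulrC ler_wpM2l ?ler_nat //; [exact: ltW | clear; lia].
apply: le_trans H1 _; apply: E_mono => u Hu Hau.
case Hx: (all _ u) => //=; try exact: ler0n.
have -> : evA 4 (s ++ u) = true.
  by move: HA; rewrite /evA take_cat Hs ltnn subnn take0 cats0 take_oversize ?Hs.
rewrite andbT.
have -> : evB (3 * r) (s ++ u) = true.
  rewrite /evB; apply/set0Pn; exists x; apply: in_bigcap => e /mem_take.
  rewrite mem_cat Es !inE => /orP [/or4P [] /eqP -> // | He].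
  exact: (allP Hx).
by [].
Qed.

Lemma size_from (rr n : nat) : (2 <= rr)%N -> (100 * rr ^ 8 < n ^ 3)%N -> (6 * rr < n)%N.
Proof.
move=> r2 H; rewrite ltnNge; apply/negP => Hn.
have h1 : (n ^ 3 <= (6 * rr) ^ 3)%N by rewrite leq_exp2r.
have h2 : (2 ^ 5 <= rr ^ 5)%N by rewrite leq_exp2r.
have e1 : ((6 * rr) ^ 3 = 216 * rr ^ 3)%N by rewrite expnMn.
have e2 : (rr ^ 8 = rr ^ 5 * rr ^ 3)%N by rewrite -expnD.
have h3 : (32 * rr ^ 3 <= rr ^ 5 * rr ^ 3)%N by apply: leq_mul.
have h4 : (0 < rr ^ 3)%N by rewrite expn_gt0; lia.
rewrite e2 in H; rewrite e1 in h1.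
move: H h1 h3 h4; clear; lia.
Qed.

Unset Implicit Arguments.

Theorem lemma5 (r : nat -> nat) :
  (forall n, (2 <= r n)%N) ->
  (* r = o(n^{3/8}), i.e. r(n)^8 = o(n^3) *)
  (forall eps : rat, 0 < eps ->
     exists N : nat, forall n : nat, (N <= n)%N ->
       ((r n) ^ 8)%:R <= eps * (n ^ 3)%:R) ->
  forall eps : rat, 0 < eps ->
    exists N : nat, forall n : nat, (N <= n)%N ->
      1 - eps <= condPr_B3r_A4 n (r n).
Proof.
move=> hr hasym eps e0.
case: (lerP 1 eps) => He.
  exists 0%N => n _.
  apply: (@le_trans _ _ 0); first by rewrite subr_le0.
  rewrite /condPr_B3r_A4 /probEv.
  rewrite (@probE n (r n) (3 * r n) [::] (fun s => (evB (3 * r n) s && evA 4 s)%:R)).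
  rewrite (@probE n (r n) 4 [::] (fun s => (evA 4 s)%:R)).
  by apply: divr_ge0; apply: E_ge0 => u; exact: ler0n.
have [N HN] := hasym (eps / 100) (divr_gt0 e0 (isT : (0 : rat) < 100)).
exists N => n Hn.
have h8 := HN n Hn.
apply: main_n => //.
apply: size_from => //.
have hA : (1 : rat) <= ((r n) ^ 8)%:R by rewrite ler1n expn_gt0; have := hr n; lia.
have hB : (0 : rat) <= (n ^ 3)%:R by exact: ler0n.
have : (100 * r n ^ 8)%:R < (n ^ 3)%:R :> rat.
  rewrite natrM.
  move: h8 hA hB; set A := ((r n) ^ 8)%:R; set B := ((n ^ 3)%:R : rat) => h8 hA hB.
  have Bp : 0 < B.
    rewrite lt_def; apply/andP; split => //; apply/eqP => B0.
    by move: h8; rewrite B0 mulr0 => h; lra.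
  have : eps * B < B by rewrite -[X in _ < X]mul1r ltr_pM2r.
  move=> H; lra.
by rewrite ltr_nat.
Qed.
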